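(* Let $A$ and $B$ be commutative rings with identity and let $\phi:A\to B$ be a surjective ring homomorphism with $\ker(\phi)=\langle\pi\rangle$ for some $\pi\in A$. If $B$ is a principal ideal ring, then for every ideal $I$ of $A$ there exists $a\in I$ such that $$I=\langle a\rangle+\pi(I:\pi).$$
   Context: For ideals $I,J$ of a commutative ring $R$, $(I:J)=\{x\in R: xJ\subseteq I\}$, and $(I:a)=(I:\langle a\rangle)$. *)

(* Defs.v *)
From mathcomp Require Import all_boot all_algebra.
Set Implicit Arguments. Unset Strict Implicit. Unset Printing Implicit Defensive.
Import GRing.Theory.
Local Open Scope ring_scope.

Definition is_ideal (R : comPzRingType) (I : R -> Prop) : Prop :=
  [/\ I 0, (forall x y, I x -> I y -> I (x + y)) & (forall r x, I x -> I (r * x))].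

Definition principal (R : comPzRingType) (a : R) : R -> Prop :=
  fun x => exists r : R, x = r * a.

Definition same_set (R : Type) (I J : R -> Prop) : Prop := forall x, I x <-> J x.

Definition principal_ideal_ring (R : comPzRingType) : Prop :=
  forall J : R -> Prop, is_ideal J -> exists b : R, same_set J (principal b).

Definition colon (R : comPzRingType) (I : R -> Prop) (a : R) : R -> Prop :=
  fun x => I (x * a).

Definition ideal_sum (R : comPzRingType) (J K : R -> Prop) : R -> Prop :=
  fun x => exists u v, [/\ J u, K v & x = u + v].

Definition scale_set (R : comPzRingType) (c : R) (J : R -> Prop) : R -> Prop :=
  fun x => exists y, J y /\ x = c * y.

(* Main.v *)
Require Import Defs.
From mathcomp Require Import all_boot all_algebra.
Import GRing.Theory.
Local Open Scope ring_scope.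

Theorem corollary2p2 (A B : comPzRingType) (phi : {rmorphism A -> B}) (pi : A)
  (phi_surj : forall b : B, exists a : A, phi a = b)
  (ker_pi : same_set (fun x : A => phi x = 0) (principal pi))
  (B_pir : principal_ideal_ring B) :
  forall I : A -> Prop, is_ideal I ->
    exists a : A, I a /\
      same_set I (ideal_sum (principal a) (scale_set pi (colon I pi))).
Proof.
move=> I [I0 ID IM].
have INeg : forall x, I x -> I (- x).
  by move=> x Ix; rewrite -mulN1r; apply: IM.
pose J := fun y : B => exists x, I x /\ phi x = y.
have hJ : is_ideal J.
  split.
  - by exists 0; rewrite rmorph0.
  - move=> y z [x [Ix <-]] [x' [Ix' <-]]; exists (x + x'); split; first exact: ID.
    by rewrite rmorphD.
  - move=> r y [x [Ix <-]]; have [s <-] := phi_surj r.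
    by exists (s * x); split; [apply: IM | rewrite rmorphM].
have [b Hb] := B_pir J hJ.
have [a [Ia pa]] : J b by apply/Hb; exists 1; rewrite mul1r.
exists a; split => // x; split.
- move=> Ix.
  have [r Er] : principal b (phi x) by apply/Hb; exists x.
  have [s Es] := phi_surj r.
  have : phi (x - s * a) = 0 by rewrite rmorphB rmorphM Es pa Er subrr.
  move/ker_pi => [t Et].
  exists (s * a), (pi * t); split.
  + by exists s.
  + exists t; split => //; rewrite /colon -Et.
    by apply: ID => //; apply: INeg; apply: IM.
  + by rewrite [pi * t]mulrC -Et addrC subrK.
- move=> [u [v [[r ->] [y [Hy ->]] ->]]].
  apply: ID; first exact: IM.
  by rewrite mulrC; exact: Hy.
Qed.
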